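(* For all rooted trees $u,v$ there exist a vector field $f$ and a quadratic functional $F$ on $Y=\mathbb R^{|u|+|v|}$ such that, for all rooted trees $\tau,\theta$, $F''\bigl(\tau(f)(0),\theta(f)(0)\bigr)\ne0$ if $(\tau,\theta)=(u,v)$ or $(\tau,\theta)=(v,u)$, and $F''\bigl(\tau(f)(0),\theta(f)(0)\bigr)=0$ otherwise.
   Context: Rooted trees: $\bullet$ is the one-vertex tree and $[\tau_1,\ldots,\tau_m]$ is the tree whose root has children that are the roots of subtrees $\tau_1,\ldots,\tau_m$ (unordered); $|\tau|$ is the number of vertices. Elementary differentials of a smooth vector field $f$: $\bullet(f)=f$, $[\tau_1,\ldots,\tau_m](f)=f^{(m)}\bigl(\tau_1(f),\ldots,\tau_m(f)\bigr)$ with $f^{(m)}$ the $m$-th derivative. A quadratic functional is a homogeneous quadratic polynomial $F\colon Y\to\mathbb R$; its Hessian $F''$ is a constant symmetric bilinear form. *)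

(* Defs.v *)
From HB Require Import structures.
From mathcomp Require Import all_boot all_order all_algebra.
From mathcomp Require Import all_classical all_reals all_analysis.
From Stdlib Require Permutation.
Set Implicit Arguments. Unset Strict Implicit. Unset Printing Implicit Defensive.
Import Order.TTheory GRing.Theory Num.Theory.
Import numFieldNormedType.Exports.
Local Open Scope ring_scope.

(* Rooted trees: a node with a (list of) children; children are unordered,
   so trees are compared up to isomorphism [tiso] (permutation of children). *)
Inductive tree : Type := Node : seq tree -> tree.

(* bullet = Node [::] ; [t1,...,tm] = Node [:: t1; ...; tm] *)
Definition bullet : tree := Node [::].

Inductive tiso : tree -> tree -> Prop :=
  | tiso_node (ts ss ss' : seq tree) :
      Permutation.Permutation ss ss' -> List.Forall2 tiso ts ss' -> tiso (Node ts) (Node ss).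

Fixpoint tree_size (t : tree) : nat :=
  match t with Node ts => (sumn (map tree_size ts)).+1 end.

Section Diff.
Variables (R : realType) (n : nat).
Local Notation Y := 'rV[R]_n.

(* Iterated directional derivative:
   Dn [:: h1; ...; hm] g x = D_{h1} ( ... (D_{hm} g) ...) x,
   i.e. g^{(m)}(x)(h1,...,hm) for smooth g. *)
Fixpoint Dn {W : normedModType R} (hs : seq Y) (g : Y -> W) : Y -> W :=
  match hs with
  | [::] => g
  | h :: hs' => fun x => derive (Dn hs' g) x h
  end.

Definition smooth (f : Y -> Y) : Prop :=
  forall (hs : seq Y) (x : Y), differentiable (Dn hs f) x.

(* Value at 0 of the elementary differential tau(f):
   [t1,...,tm](f)(0) = f^{(m)}(0)(t1(f)(0), ..., tm(f)(0)). *)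
Fixpoint eldiff0 (f : Y -> Y) (t : tree) : Y :=
  match t with Node ts => Dn (map (eldiff0 f) ts) f 0 end.

Definition quadratic_functional (F : Y -> R) : Prop :=
  exists A : 'M[R]_n, forall y : Y, F y = (y *m A *m y^T) 0 0.

(* Hessian F''(a,b) (constant in the base point for a quadratic F; taken at 0). *)
Definition hessian (F : Y -> R) (a b : Y) : R := Dn [:: a; b] F 0.

End Diff.

(* Main.v *)
Require Import Defs.
From HB Require Import structures.
From mathcomp Require Import all_boot all_order all_algebra.
From mathcomp Require Import all_classical all_reals all_analysis.
From Stdlib Require Import Permutation.
Import Order.TTheory GRing.Theory Num.Theory.
Import numFieldNormedType.Exports.


Definition tree_ind' (P : tree -> Prop)
  (H : forall ts, (forall t, List.In t ts -> P t) -> P (Node ts)) : forall t, P t :=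
  fix F t := match t with Node ts => H ts
    ((fix G (ts : seq tree) : forall t, List.In t ts -> P t :=
       match ts with
       | [::] => fun t (i : List.In t [::]) => False_ind _ i
       | s :: ts' => fun t i => match i with
                                | or_introl e => eq_ind s P (F s) t e
                                | or_intror i' => G ts' t i' end
       end) ts) end.

Fixpoint T (t : tree) : seq tree :=
  match t with Node ts => t :: flatten (map T ts) end.

Definition children (t : tree) := match t with Node ts => ts end.

Fixpoint cpos (k : nat) (ts : seq tree) : seq nat :=
  match ts with [::] => [::] | t :: ts' => k :: cpos (k + tree_size t) ts' end.

Lemma size_T t : size (T t) = tree_size t.
Proof.
elim/tree_ind': t => ts IH /=; congr S; rewrite size_flatten /shape.
elim: ts IH => [|t ts IHts] IH //=.
rewrite IH; last by left.
by rewrite IHts // => s Hs; apply: IH; right.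
Qed.

Definition good (L : seq tree) := forall p, p < size L ->
  exists rest, drop p L = T (nth bullet L p) ++ rest.

Lemma good_nil : good [::].
Proof. by []. Qed.

Lemma good_cat L1 L2 : good L1 -> good L2 -> good (L1 ++ L2).
Proof.
move=> H1 H2 p; rewrite size_cat => Hp.
case: (ltnP p (size L1)) => Hp1.
  have [rest Hr] := H1 p Hp1.
  by exists (rest ++ L2); rewrite drop_cat Hp1 nth_cat Hp1 Hr catA.
have Hp2 : p - size L1 < size L2 by rewrite ltn_subLR.
have [rest Hr] := H2 _ Hp2.
by exists rest; rewrite drop_cat ltnNge Hp1 nth_cat ltnNge Hp1 /= Hr.
Qed.

Lemma good_T t : good (T t).
Proof.
elim/tree_ind': t => ts IH p /=.
case: p => [|p] Hp.
  by exists [::]; rewrite drop0 cats0.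
have : good (flatten (map T ts)).
  elim: ts IH {Hp} => [|t ts IHts] IH /=; first exact: good_nil.
  apply: good_cat; first by apply: IH; left.
  by apply: IHts => s Hs; apply: IH; right.
by move/(_ p Hp).
Qed.

Lemma children_pos L k ts rest : drop k L = flatten (map T ts) ++ rest ->
  map (nth bullet L) (cpos k ts) = ts /\ (forall c, List.In c (cpos k ts) -> c < size L).
Proof.
elim: ts k => [|t ts IH] k //= Hd.
have Hk : k < size L.
  by rewrite -subn_gt0 -size_drop Hd; case: t {Hd} => ss.
have Hn : nth bullet L k = t.
  by rewrite -[k]addn0 -nth_drop Hd; case: t {Hd}.
have Hd' : drop (k + tree_size t) L = flatten (map T ts) ++ rest.
  by rewrite addnC -drop_drop Hd -catA -size_T drop_size_cat.
have [IH1 IH2] := IH _ Hd'.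
split; first by rewrite Hn IH1.
by move=> c [<-|Hc] //; apply: IH2.
Qed.
Local Open Scope ring_scope.

Section An.
Variables (R : realType) (n : nat).
Local Notation Y := 'rV[R]_n.

Lemma row_fun_sum (g : 'I_n -> Y -> R) :
  (fun x => \row_i g i x) = \sum_(i < n) (fun x => g i x *: (delta_mx 0 i : Y)).
Proof.
apply: funext => x; rewrite fct_sumE.
by rewrite {1}(row_sum_delta (\row_i g i x)); apply: eq_bigr => i _; rewrite mxE.
Qed.

Lemma row_diff (g : 'I_n -> Y -> R) x :
  (forall i, differentiable (g i) x) -> differentiable (fun x => \row_i g i x) x.
Proof.
move=> H; rewrite row_fun_sum; apply: differentiable_sum => i.
exact: differentiableZl.
Qed.

Lemma row_derive (g : 'I_n -> Y -> R) x h :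
  (forall i, differentiable (g i) x) ->
  'D_h (fun x => \row_i g i x) x = \row_i 'D_h (g i) x.
Proof.
move=> H; rewrite row_fun_sum derive_sum; last first.
  by move=> i; apply: diff_derivable; exact: differentiableZl.
rewrite [RHS]row_sum_delta; apply: eq_bigr => i _.
rewrite deriveE; last exact: differentiableZl.
by rewrite diffZl // mxE deriveE.
Qed.

Definition crd (c : nat) (y : Y) : R :=
  oapp (fun j : 'I_n => y 0 j) 0 (insub c).

Lemma crd_linear_derive (j : 'I_n) x h :
  'D_h (fun y : Y => y 0 j) x = h 0 j.
Proof.
have @f : {linear Y -> R}.
  by exists (fun N : Y => N 0 j); do 2![eexists]; do ?[constructor];
     rewrite ?mxE// => ? *; rewrite ?mxE//; move=> ?; rewrite !mxE.
rewrite (_ : (fun _ => _) = f) //.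
rewrite deriveE; last exact/linear_differentiable/coord_continuous.
by rewrite diff_lin //; exact: coord_continuous.
Qed.

Lemma crd_diff c x : differentiable (crd c) x.
Proof.
rewrite /crd; case: insubP => [j _ _|_] /=.
  exact: differentiable_coord.
exact: differentiable_cst.
Qed.

Lemma crd_is_derive c x h : is_derive x h (crd c) (crd c h).
Proof.
apply: DeriveDef; first exact/diff_derivable/crd_diff.
rewrite /crd; case: insubP => [j _ _|_] /=.
  exact: crd_linear_derive.
exact: (derive_cst (0:R)).
Qed.

End An.
Arguments crd {R n} c y.
Arguments crd_diff {R n} c x.
Arguments crd_is_derive {R n} c x h.
Local Open Scope ring_scope.

Section G.
Variables (R : realType) (n : nat).
Local Notation Y := 'rV[R]_n.

Definition rem_at (k : nat) (s : seq Y) := take k s ++ drop k.+1 s.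

Fixpoint G (cs : seq nat) (hs : seq Y) (x : Y) : R :=
  match cs with
  | [::] => if hs is [::] then 1 else 0
  | c :: cs' => crd c x * G cs' hs x +
      \sum_(k < size hs) crd c (nth 0 hs k) * G cs' (rem_at k hs) x
  end.

Lemma G_cons c cs hs : G (c :: cs) hs =
  (crd c * G cs hs) + \sum_(k < size hs) (crd c (nth 0 hs k) \*: G cs (rem_at k hs)).
Proof. by apply: funext => x /=; rewrite fct_sumE. Qed.

Lemma G_diff cs hs x : differentiable (G cs hs) x.
Proof.
elim: cs hs => [|c cs IH] hs.
  by rewrite (_ : G [::] hs = cst (if hs is [::] then 1 else 0)) //; exact: differentiable_cst.
rewrite G_cons; apply: differentiableD.
  apply: differentiableM => //; exact: crd_diff.
apply: differentiable_sum => k; exact: differentiableZ.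
Qed.

Lemma G_derive cs hs x h : is_derive x h (G cs hs) (G cs (h :: hs) x).
Proof.
elim: cs hs => [|c cs IH] hs.
  by rewrite (_ : G [::] hs = cst (if hs is [::] then 1 else 0)) //; exact: is_derive_cst.
rewrite G_cons.
have H1 := is_deriveM (crd_is_derive c x h) (IH hs).
have H2 := @is_derive_sum _ _ _ (size hs) (fun k => crd c (nth 0 hs k) \*: G cs (rem_at k hs)) x h
   (fun k => crd c (nth 0 hs k) *: G cs (h :: rem_at k hs) x) (fun k => is_deriveZ _ (IH _)).
apply: (is_derive_eq (is_deriveD H1 H2)).
rewrite /= big_ord_recl /= /rem_at /= drop0.
rewrite addrA; congr (_ + _ + _); first by rewrite mulrC.
Qed.
End G.
Arguments rem_at {R n} k s.
Arguments G {R n} cs hs x.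
Arguments G_derive {R n} cs hs x h.
Arguments G_diff {R n} cs hs x.
Local Open Scope ring_scope.

Section Pos.
Variables (R : realType) (n : nat).
Local Notation Y := 'rV[R]_n.

Definition nonneg (h : Y) := forall j : 'I_n, 0 <= h 0 j.
Definition allnn (hs : seq Y) := forall h, h \in hs -> nonneg h.

Lemma crd_ge0 c h : nonneg h -> 0 <= crd c h.
Proof. by rewrite /crd; case: insubP => [j _ _|_] /=. Qed.

Lemma crd0 c : crd c (0 : Y) = 0.
Proof. by rewrite /crd; case: insubP => [j _ _|_] //=; rewrite mxE. Qed.

Lemma allnn_rem_at k (hs : seq Y) : allnn hs -> allnn (rem_at k hs).
Proof.
move=> H h; rewrite /rem_at mem_cat => /orP[/mem_take|/mem_drop]; exact: H.
Qed.

Lemma G0_ge0 cs hs : allnn hs -> 0 <= G cs hs 0.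
Proof.
elim: cs hs => [|c cs IH] hs Hhs /=; first by case: hs Hhs.
rewrite crd0 mul0r add0r; apply: sumr_ge0 => k _.
apply: mulr_ge0; last exact/IH/allnn_rem_at.
by apply: crd_ge0; apply: Hhs; rewrite mem_nth.
Qed.

Lemma G0_neq0 cs hs : allnn hs ->
  (G cs hs 0 != 0 <-> exists cs', Permutation cs cs' /\
      List.Forall2 (fun h c => crd c h != 0) hs cs').
Proof.
elim: cs hs => [|c cs IH] hs Hhs.
  case: hs Hhs => [|h hs] Hhs /=.
    split=> // _; exists [::]; split; constructor.
  rewrite eqxx; split=> //; case=> cs0 [/Permutation_nil -> H]; inversion H.
have Hge k : (k < size hs)%N -> 0 <= crd c (nth 0 hs k) * G cs (rem_at k hs) 0.
  move=> Hk; apply: mulr_ge0; last exact/G0_ge0/allnn_rem_at.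
  by apply: crd_ge0; apply: Hhs; rewrite mem_nth.
have Hge' : forall k : 'I_(size hs), true -> 0 <= crd c (nth 0 hs k) * G cs (rem_at k hs) 0.
  by move=> k _; exact: Hge.
rewrite /= crd0 mul0r add0r; split.
- move=> /eqP /(psumr_neq0P Hge') [k /= Hk].
  have /andP[Ha Hg] : (crd c (nth 0 hs k) != 0) && (G cs (rem_at k hs) 0 != 0).
    by move: Hk; rewrite lt0r mulf_eq0 negb_or => /andP[].
  have [cs'' [Hp HF]] := (IH _ (allnn_rem_at k _ Hhs)).1 Hg.
  have [l1 [l2 [H1 [H2 Heq]]]] := List.Forall2_app_inv_l _ _ HF; subst cs''.
  exists (l1 ++ c :: l2); split.
    apply: perm_trans (Permutation_middle _ _ _); exact: perm_skip.
  rewrite -(cat_take_drop k hs) (drop_nth 0 (ltn_ord k)).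
  apply: List.Forall2_app => //; exact: List.Forall2_cons.
- move=> [cs' [Hp HF]].
  have Hin : List.In c cs' by apply: (Permutation_in _ Hp); left.
  have [l1 [l2 Hl]] := List.in_split _ _ Hin.
  move: HF; rewrite Hl => /List.Forall2_app_inv_r [m1 [m2 [H1 [H2 Hm]]]].
  inversion H2 as [|h l1' m2' l2' Hh H2']; subst.
  have Hp' := Permutation_cons_app_inv _ _ Hp.
  have Hlt : (size m1 < size (m1 ++ h :: m2'))%N by rewrite size_cat /= addnS ltnS leq_addr.
  apply/eqP => /(psumr_eq0P Hge') /(_ (Ordinal Hlt) isT) /=.
  rewrite nth_cat ltnn subnn /= /rem_at take_size_cat //.
  rewrite drop_cat ltnNge leqnSn /= subSnn /= drop0.
  move/eqP; rewrite mulf_eq0 (negbTE Hh) /=; apply/negP.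
  apply/(IH _ _).2; last by exists (l1 ++ l2); split => //; exact: List.Forall2_app.
  by move=> x; rewrite mem_cat => /orP[] Hx; apply: Hhs; rewrite mem_cat in_cons Hx ?orbT.
Qed.
End Pos.
Arguments nonneg {R n} h.
Arguments allnn {R n} hs.
Arguments G0_ge0 {R n} cs hs.
Arguments G0_neq0 {R n} cs hs.
Local Open Scope ring_scope.

Section Dfv.
Variables (R : realType) (n : nat).
Local Notation Y := 'rV[R]_n.

Lemma Dn_G cs hs : Dn hs (G cs [::]) = G (n:=n) (R:=R) cs hs.
Proof.
elim: hs => [|h hs IH] //=; apply: funext => x; rewrite IH.
by case: (G_derive cs hs x h).
Qed.

Definition fv (cs : 'I_n -> seq nat) : Y -> Y := fun y => \row_i G (cs i) [::] y.

Lemma Dn_fv cs hs : Dn hs (fv cs) = fun x => \row_i G (cs i) hs x.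
Proof.
elim: hs => [|h hs IH] //=; apply: funext => x; rewrite IH row_derive.
  by apply/rowP => i; rewrite !mxE; case: (G_derive (cs i) hs x h).
by move=> i; exact: G_diff.
Qed.

Lemma smooth_fv cs : smooth (fv cs).
Proof. by move=> hs x; rewrite Dn_fv; apply: row_diff => i; exact: G_diff. Qed.

End Dfv.
Arguments fv {R n} cs y.
Arguments Dn_fv {R n} cs hs.
Arguments Dn_G {R n} cs hs.
Arguments smooth_fv {R n} cs.
Local Open Scope ring_scope.

Lemma crd_ord (R : realType) n c (y : 'rV[R]_n) (H : (c < n)%N) : crd c y = y 0 (Ordinal H).
Proof. by rewrite /crd insubT. Qed.

Lemma F2 (R : realType) n (L : seq tree) (g : tree -> 'rV[R]_n) ts cs :
  (forall t, List.In t ts -> forall j : 'I_n, g t 0 j != 0 <-> tiso t (nth bullet L j)) ->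
  (forall c, List.In c cs -> (c < n)%N) ->
  (List.Forall2 (fun h c => crd c h != 0) (map g ts) cs <->
   List.Forall2 tiso ts (map (nth bullet L) cs)).
Proof.
elim: ts cs => [|t ts IH] [|c cs] Ht Hc /=.
- by split=> _; constructor.
- by split=> H; inversion H.
- by split=> H; inversion H.
have Hc0 : (c < n)%N by apply: Hc; left.
have {}IH := IH cs (fun s Hs => Ht s (or_intror Hs)) (fun d Hd => Hc d (or_intror Hd)).
have Ht0 : crd c (g t) != 0 <-> tiso t (nth bullet L c).
  by rewrite (crd_ord _ _ _ _ Hc0); exact: (Ht t (or_introl erefl) (Ordinal Hc0)).
split=> H; inversion H; subst; constructor.
- by apply/Ht0.
- by apply/IH.
- by apply/Ht0.
- by apply/IH.
Qed.

Lemma allnn_map (R : realType) n (g : tree -> 'rV[R]_n) ts :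
  (forall t, List.In t ts -> nonneg (g t)) -> allnn (map g ts).
Proof.
elim: ts => [|t ts IH] H h //=.
rewrite in_cons => /orP[/eqP ->|Hh]; first by apply: H; left.
by apply: IH => // s Hs; apply: H; right.
Qed.

Definition Lt u v := T u ++ T v.
Definition csf u v (i : 'I_(tree_size u + tree_size v)) : seq nat :=
  cpos i.+1 (children (nth bullet (Lt u v) i)).

Lemma size_Lt u v : size (Lt u v) = (tree_size u + tree_size v)%N.
Proof. by rewrite /Lt size_cat !size_T. Qed.

Lemma main_tree (R : realType) u v tau :
  forall i : 'I_(tree_size u + tree_size v),
  0 <= eldiff0 (fv (R:=R) (csf u v)) tau 0 i /\
  (eldiff0 (fv (R:=R) (csf u v)) tau 0 i != 0 <-> tiso tau (nth bullet (Lt u v) i)).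
Proof.
elim/tree_ind': tau => ts IH i.
set f := fv (csf u v).
have E : eldiff0 f (Node ts) 0 i = G (csf u v i) (map (eldiff0 f) ts) 0.
  by rewrite /= Dn_fv mxE.
have Hnn : allnn (map (eldiff0 f) ts).
  by apply: allnn_map => t Ht j; exact: (IH t Ht j).1.
split; first by rewrite E; exact: G0_ge0.
rewrite E G0_neq0 //.
have HL : good (Lt u v) := @good_cat _ _ (good_T u) (good_T v).
have Hi : (i < size (Lt u v))%N by rewrite size_Lt.
have [rest Hr] := HL i Hi.
rewrite /csf; case En : (nth bullet (Lt u v) i) Hr => [ss] Hr /=.
have Hd : drop i.+1 (Lt u v) = flatten (map T ss) ++ rest.
  by rewrite -add1n -drop_drop Hr /= drop0.
have [Hmap Hlt] := children_pos _ _ _ _ Hd.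
have IH' : forall t, List.In t ts -> forall j : 'I_(tree_size u + tree_size v),
    eldiff0 f t 0 j != 0 <-> tiso t (nth bullet (Lt u v) j).
  by move=> t Ht j; exact: (IH t Ht j).2.
split.
- move=> [cs' [Hp HF]].
  apply: (tiso_node (ss' := map (nth bullet (Lt u v)) cs')).
    by rewrite -{1}Hmap; apply: Permutation_map.
  have Hr' : forall c, List.In c cs' -> (c < tree_size u + tree_size v)%N.
    move=> c Hc; rewrite -size_Lt; apply: Hlt.
    exact: (Permutation_in _ (Permutation_sym Hp)).
  exact/(F2 _ _ _ _ _ _ IH' Hr').
- move=> H; inversion H as [ts0 ss0 ss' Hp HF]; subst.
  have Hp' : Permutation ss' (map (nth bullet (Lt u v)) (cpos i.+1 ss)).
    by rewrite Hmap; apply: Permutation_sym.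
  have [cs' [Heq Hp2]] := Permutation_map_inv _ _ Hp'.
  exists cs'; split => //.
  have Hr' : forall c, List.In c cs' -> (c < tree_size u + tree_size v)%N.
    move=> c Hc; rewrite -size_Lt; apply: Hlt.
    exact: (Permutation_in _ (Permutation_sym Hp2)).
  have Heq' : ss' = map (nth bullet (Lt u v)) cs'.
    by rewrite Heq; elim: (cs') => //= a l ->.
  by apply/(F2 _ _ _ _ _ _ IH' Hr'); rewrite -Heq'.
Qed.
Local Open Scope ring_scope.

Lemma quad_delta (R : realType) n (i j : 'I_n) (y : 'rV[R]_n) :
  (y *m delta_mx i j *m y^T) 0 0 = y 0 i * y 0 j.
Proof.
rewrite !mxE (bigD1 j) //= big1 ?addr0; last first.
  move=> k Hk; rewrite !mxE big1 ?mul0r // => l _.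
  by rewrite mxE (negbTE Hk) andbF mulr0.
rewrite mxE (bigD1 i) //= big1 ?addr0; last first.
  by move=> l Hl; rewrite mxE (negbTE Hl) mulr0.
by rewrite !mxE !eqxx mulr1.
Qed.

Theorem lemmaA2 (R : realType) (u v : tree) :
  exists (f : 'rV[R]_(tree_size u + tree_size v) -> 'rV[R]_(tree_size u + tree_size v))
         (F : 'rV[R]_(tree_size u + tree_size v) -> R),
    smooth f /\ quadratic_functional F /\
    forall tau theta : tree,
      (hessian F (eldiff0 f tau) (eldiff0 f theta) != 0 <->
       ((tiso tau u /\ tiso theta v) \/ (tiso tau v /\ tiso theta u))).
Proof.
have Hsu : (tree_size u < tree_size u + tree_size v)%N.
  by rewrite -{1}[tree_size u]addn0 ltn_add2l; case: (v).
have H0 : (0 < tree_size u + tree_size v)%N by rewrite addn_gt0; case: (u) => ?.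
pose i0 := Ordinal H0; pose iu := Ordinal Hsu.
exists (fv (csf u v)), (G [:: 0%N; tree_size u] [::]).
split; first exact: smooth_fv.
split.
  exists (delta_mx i0 iu) => y.
  rewrite quad_delta /= !big_ord0 !addr0 mulr1.
  by rewrite (crd_ord _ _ _ _ H0) (crd_ord _ _ _ _ Hsu).
move=> tau theta.
have T0 : forall t, nth bullet (T t) 0 = t by case.
have Lu : nth bullet (Lt u v) i0 = u by rewrite /Lt /= nth_cat size_T (_ : 0 < tree_size u)%N ?T0 //; case: (u).
have Lv : nth bullet (Lt u v) iu = v.
  by rewrite /Lt /= nth_cat size_T ltnn subnn T0.
have Ha := main_tree R u v tau; have Hb := main_tree R u v theta.
set a := eldiff0 _ tau; set b := eldiff0 _ theta.
rewrite /hessian Dn_G G0_neq0; last first.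
  move=> h; rewrite !inE => /orP[] /eqP -> j; [exact: (Ha j).1|exact: (Hb j).1].
have Ca0 : crd 0 a != 0 <-> tiso tau u by rewrite (crd_ord _ _ _ _ H0) ; move: (Ha i0).2; rewrite Lu.
have Cau : crd (tree_size u) a != 0 <-> tiso tau v by rewrite (crd_ord _ _ _ _ Hsu) ; move: (Ha iu).2; rewrite Lv.
have Cb0 : crd 0 b != 0 <-> tiso theta u by rewrite (crd_ord _ _ _ _ H0) ; move: (Hb i0).2; rewrite Lu.
have Cbu : crd (tree_size u) b != 0 <-> tiso theta v by rewrite (crd_ord _ _ _ _ Hsu) ; move: (Hb iu).2; rewrite Lv.
split.
- case=> cs' [Hp HF].
  case: (Permutation_length_2_inv Hp) => Hc; rewrite Hc in HF.
  + inversion HF as [|? ? ? ? K1 HF']; inversion HF' as [|? ? ? ? K2 _]; subst.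
    by left; split; [apply/Ca0|apply/Cbu].
  + inversion HF as [|? ? ? ? K1 HF']; inversion HF' as [|? ? ? ? K2 _]; subst.
    by right; split; [apply/Cau|apply/Cb0].
- case=> [[Ht1 Ht2]|[Ht1 Ht2]].
  + exists [:: 0%N; tree_size u]; split; first exact: Permutation_refl.
    by constructor; [apply/Ca0|constructor; [apply/Cbu|constructor]].
  + exists [:: tree_size u; 0%N]; split; first exact: perm_swap.
    by constructor; [apply/Cau|constructor; [apply/Cb0|constructor]].
Qed.
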